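(* For $N$ a positive integer let $J_N$ be the number of vectors $(\delta_0,\ldots,\delta_N)\in\{-1,1\}^{N+1}$ with $\sum_{i=0}^N\delta_i\binom{N}{i}=0$. Then for $N=2^n$ with $n\ge 3$ sufficiently large, $$J_{2^n}\le 0.3258\cdot 2^{3\cdot 2^{n-2}-\frac{n-3}{2}}.$$ *)

(* Defs.v *)
From mathcomp Require Import all_boot all_order all_algebra.
Set Implicit Arguments. Unset Strict Implicit. Unset Printing Implicit Defensive.
Import GRing.Theory Num.Theory.

(* sign vector delta in {-1,1}^(N+1), encoded by d : 'I_(N+1) -> bool,
   delta_i = 1 if d i, -1 otherwise *)
Definition sgn_of (b : bool) : int := if b then 1%R else (-1)%R.

Definition J (N : nat) : nat :=
  #|[set d : {ffun 'I_N.+1 -> bool} |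
      (\sum_(i < N.+1) sgn_of (d i) * ('C(N, i))%:Z)%R == 0%R]|.

(* Main.v *)
Require Import Defs.
From Stdlib Require Import Reals Lia Lra.
From mathcomp Require zify.

Module Aux.
Import all_boot all_order all_algebra zify.
Import Order.TTheory GRing.Theory Num.Theory.
Local Open Scope ring_scope.

Lemma key (e a : nat -> int) (j m : nat) :
  (j < m)%N ->
  (forall i, `|e i| <= 2) -> (forall i, 0 <= a i) ->
  (forall i, (j < i)%N -> (i < m)%N -> e i = 0) ->
  \sum_(0 <= i < j) a i < a j ->
  \sum_(0 <= i < m) e i * a i = 0 ->
  `|e j * a j| < 2 * a j.
Proof.
move=> jm He Ha He0 Hs H.
rewrite (@big_cat_nat _ _ _ j 0 m _ _ (leq0n j) (ltnW jm)) /= (big_ltn jm) in H.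
have T : \sum_(j.+1 <= i < m) e i * a i = 0.
  rewrite big_nat_cond big1 // => i /andP[/andP[Hi Hm] _].
  by rewrite He0 // mul0r.
rewrite T addr0 in H.
have -> : e j * a j = - \sum_(0 <= i < j) e i * a i.
  by apply/eqP; rewrite -(subr_eq0) opprK addrC H.
rewrite normrN.
apply: (le_lt_trans (ler_norm_sum _ _ _)).
apply: (le_lt_trans (y := \sum_(0 <= i < j) 2 * a i)).
  apply: ler_sum => i _; rewrite normrM (ger0_norm (Ha i)).
  by apply: ler_wpM2r.
by rewrite -mulr_sumr ltr_pM2l.
Qed.

Lemma sgn_le (b c : bool) : `|sgn_of b - sgn_of c| <= 2 :> int.
Proof. by case: b; case: c. Qed.
Lemma sgn_ne (b c : bool) : b != c -> `|sgn_of b - sgn_of c| = 2 :> int.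
Proof. by case: b; case: c. Qed.

Lemma count_bound (N k : nat) : (k <= N)%N ->
  (forall j, (j <= k)%N -> (\sum_(0 <= i < j) 'C(N,i) < 'C(N,j))%N) ->
  (J N <= 2 ^ (N - k))%N.
Proof.
move=> kN Hs.
set A := [set d : {ffun 'I_N.+1 -> bool} |
      (\sum_(i < N.+1) sgn_of (d i) * ('C(N, i))%:Z)%R == 0%R].
pose f (d : {ffun 'I_N.+1 -> bool}) : {ffun 'I_(N - k) -> bool} :=
  [ffun t : 'I_(N-k) => d (inord (t + k.+1))].
have inj : {in A &, injective f}.
  move=> d d'; rewrite !inE => /eqP Hd /eqP Hd' Hf.
  have top : forall i : 'I_N.+1, (k < i)%N -> d i = d' i.
    move=> i ki.
    have ti : (i - k.+1 < N - k)%N by have := ltn_ord i; lia.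
    have := congr1 (fun g : {ffun _ -> bool} => g (Ordinal ti)) Hf; rewrite /f !ffunE /=.
    by rewrite subnK // inord_val.
  have down : forall t (i : 'I_N.+1), (k.+1 - t <= i)%N -> d i = d' i.
    elim=> [|t IH] i Hi; first by apply: top; rewrite subn0 in Hi.
    case: (leqP (k.+1 - t) i) => Hit; first exact: IH.
    have ij : (i : nat) = (k.+1 - t.+1)%N by lia.
    apply/eqP; apply/negPn/negP => Hne.
    pose e x := sgn_of (d (inord x)) - sgn_of (d' (inord x)).
    pose a x := ('C(N, x))%:Z.
    have := @key e a i N.+1 (ltn_ord i).
    have -> : e i * a i = (sgn_of (d i) - sgn_of (d' i)) * a i.
      by rewrite /e inord_val.
    have Ha0 : (0 : int) <= a i by [].
    rewrite normrM sgn_ne // (ger0_norm Ha0) ltxx => K.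
    have: false; last by [].
    apply: K.
    - by move=> x; apply: sgn_le.
    - by move=> x; rewrite /a.
    - move=> x ix xN; rewrite /e.
      have := IH (inord x); rewrite inordK // => ->; first by rewrite subrr.
      lia.
    - rewrite /a -(big_morph Posz PoszD (erefl _)) ltz_nat; apply: Hs; lia.
    - rewrite big_mkord.
      under eq_bigr => x _ do rewrite /e /a inord_val mulrBl.
      by rewrite sumrB Hd Hd' subrr.
  apply/ffunP => i; apply: (down k.+1); lia.
rewrite /J -/A -(card_in_imset inj).
apply: leq_trans (max_card _) _.
by rewrite card_ffun card_bool card_ord.
Qed.


Lemma bin_ratio N i : (3 * i + 2 <= N)%N -> (2 * 'C(N,i) <= 'C(N,i.+1))%N.
Proof.
move=> H; have E := mul_bin_left N i.
have H2 : (2 * i.+1 <= N - i)%N by lia.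
have : (i.+1 * (2 * 'C(N, i)) <= i.+1 * 'C(N, i.+1))%N.
  by rewrite E mulnA [(i.+1 * 2)%N]mulnC leq_mul2r H2 orbT.
by rewrite leq_pmul2l.
Qed.

Lemma sum_lt N k : (forall i, (i < k)%N -> (3 * i + 2 <= N)%N) ->
  forall j, (j <= k)%N -> (\sum_(0 <= i < j) 'C(N,i) < 'C(N,j))%N.
Proof.
move=> Hk; elim=> [|j IH] jk; first by rewrite big_geq // bin0.
rewrite big_nat_recr //=.
have := @bin_ratio N j (Hk j jk); have := IH (ltnW jk); lia.
Qed.

Lemma powE n : Nat.pow 2 n = (2 ^ n)%N.
Proof. by elim: n => //= n IH; rewrite IH expnS mulnE. Qed.

Lemma grow m : (3 * (m + 7) <= 2 ^ (m + 5))%N.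
Proof.
elim: m => [|m IH] //.
have -> : (m.+1 + 5 = (m + 5).+1)%N by lia.
rewrite expnS; move: IH; generalize (2 ^ (m + 5))%N => p; lia.
Qed.

Lemma main_nat n : (7 <= n)%N -> (J (2 ^ n) <= 2 ^ (3 * 2 ^ (n - 2) - n))%N.
Proof.
move=> n7.
have [m ->] : exists m, n = (m + 7)%N by exists (n - 7)%N; lia.
have -> : (m + 7 - 2 = m + 5)%N by lia.
have E : (2 ^ (m + 7) = 4 * 2 ^ (m + 5))%N.
  have -> : (m + 7 = (m + 5).+2)%N by lia.
  by rewrite !expnS mulnA.
have G := grow m.
rewrite E.
move: G; generalize (2 ^ (m + 5))%N => p G.
have -> : (3 * p - (m + 7) = 4 * p - (p + (m + 7)))%N by lia.
apply: count_bound; first by lia.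
apply: sum_lt => i Hi; lia.
Qed.

Lemma main_peano n : (7 <= n)%coq_nat ->
  (J (Nat.pow 2 n) <= Nat.pow 2 (Nat.sub (Nat.mul 3 (Nat.pow 2 (Nat.sub n 2))) n))%coq_nat.
Proof.
move=> /ssrnat.leP H; apply/ssrnat.leP; rewrite !powE -!subnE -mulnE; exact: main_nat.
Qed.

Lemma n_le n : (7 <= n)%coq_nat -> (n <= 3 * Nat.pow 2 (Nat.sub n 2))%coq_nat.
Proof.
move=> /ssrnat.leP H; apply/ssrnat.leP; rewrite powE -subnE.
have [m ->] : exists m, n = (m + 7)%N by exists (n - 7)%N; lia.
have -> : (m + 7 - 2 = m + 5)%N by lia.
have := grow m; lia.
Qed.

End Aux.

Open Scope R_scope.

Theorem theorem5 :
  exists n0 : nat, forall n : nat, (3 <= n)%nat -> (n0 <= n)%nat ->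
    INR (J (2 ^ n)) <=
      (3258 / 10000) * Rpower 2 (3 * 2 ^ (n - 2) - (INR n - 3) / 2).
Proof.
exists 7%nat. intros n _ H7.
pose proof (Aux.main_peano n H7) as HJ.
pose proof (Aux.n_le n H7) as Hq.
apply le_INR in HJ. rewrite pow_INR in HJ.
replace (INR 2) with 2 in HJ by (simpl; lra).
eapply Rle_trans; [exact HJ|].
set (q := (3 * Nat.pow 2 (n - 2))%nat) in *.
assert (Eq : 3 * 2 ^ (n - 2) = INR q).
{ unfold q. rewrite mult_INR. rewrite pow_INR. replace (INR 3) with 3 by (simpl; lra). replace (INR 2) with 2 by (simpl; lra). reflexivity. }
rewrite Eq.
replace (INR q - (INR n - 3) / 2) with (INR (q - n) + (INR n + 3) / 2)
  by (rewrite minus_INR; [lra| exact Hq]).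
rewrite Rpower_plus. rewrite Rpower_pow; [|lra].
assert (H4 : Rpower 2 2 <= Rpower 2 ((INR n + 3) / 2)).
{ apply Rle_Rpower; [lra|]. apply le_INR in H7. simpl INR in H7. lra. }
replace (Rpower 2 2) with 4 in H4.
2:{ replace 2 with (INR 2) at 2 by (simpl; lra). rewrite Rpower_pow; [simpl; lra|lra]. }
assert (Hp : 0 < 2 ^ (q - n)) by (apply pow_lt; lra).
nra.
Qed.
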